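(* Let $l\in\{1,\dots,r\}$ and let $i=i(l)$ be the unique positive integer with $0\le \sum_{j=i}^nM_j-lp<M_i$. Then the $\mathrm{id}$-leading term of $I^{[l]}(z)$ equals $$(-1)^{\sum_{j=1}^iM_j}\,\frac{\Gamma_{\mathbb{F}_p}(M_i+1)\,\Gamma_{\mathbb{F}_p}\big(\sum_{j=i+1}^nM_j-(l-1)p+1\big)}{\Gamma_{\mathbb{F}_p}\big(\sum_{j=i}^nM_j-lp+1\big)}\Big(\frac{\sum_{j=i+1}^ne_j}{\sum_{j=i+1}^nM_j}-\frac{e_i}{M_i}\Big)\,z_1^{M_1}\cdots z_{i-1}^{M_{i-1}}z_i^{\sum_{j=i}^nM_j-lp}.$$
   Context: Let $p,q$ be primes and $n$ a positive integer with $p>n\ge2$, $p>q$. Fix positive integers $m_1,\dots,m_n<q$; $M_i$ is the least positive integer with $M_i\equiv -m_iq^{-1}\pmod p$ (so $1\le M_i\le p-1$), and in formulas over $\mathbb{F}_p$ denotes its residue. $e_1,\dots,e_n$ is the standard basis of $\mathbb{F}_p^n$. With $\Phi_p(x,z)=\prod_{i=1}^n(x-z_i)^{M_i}$, for a positive integer $l$, $I^{[l]}(z)\in\mathbb{F}_p[z_1,\dots,z_n]^n$ is the coefficient of $x^{lp-1}$ in $\big(\Phi_p/(x-z_1),\dots,\Phi_p/(x-z_n)\big)$. $r=\lfloor (M_1+\dots+M_n)/p\rfloor$. Monomials $z_1^{d_1}\cdots z_n^{d_n}$ are ordered lexicographically by exponent vectors $(d_1,\dots,d_n)$ (so $z_1>z_2>\dots>z_n$);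 the $\mathrm{id}$-leading term of a nonzero $f\in\mathbb{F}_p[z]^n$ is $a\,z^d$ where $z^d$ is the largest monomial occurring in $f$ with nonzero coefficient $a\in\mathbb{F}_p^n$. For an integer $1\le x\le p$, $\Gamma_{\mathbb{F}_p}(x)$ is the residue of $(-1)^{x-1}(x-1)!$. *)

(* Defs.v *)
From HB Require Import structures.
From mathcomp Require Import all_boot all_order all_algebra.
From mathcomp Require Import multinomials.mpoly.
Set Implicit Arguments. Unset Strict Implicit. Unset Printing Implicit Defensive.
Import Order.TTheory GRing.Theory.
Local Open Scope ring_scope.

Fixpoint lexle (s t : seq nat) : bool :=
  match s, t with
  | x :: s', y :: t' => (x < y)%N || ((x == y) && lexle s' t')
  | _, _ => true
  end.

Definition mlexle (n : nat) (d e : 'X_{1..n}) : bool := lexle (tval (multinom_val d)) (tval (multinom_val e)).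

Definition GammaFp (p : nat) (x : nat) : 'F_p := (-1) ^+ x.-1 * (x.-1)`!%:R.

Definition Phi (p n : nat) (M : 'I_n -> nat) : {poly {mpoly 'F_p[n]}} :=
  \prod_(k < n) ('X - ('X_k)%:P) ^+ M k.

Definition Il (p n : nat) (M : 'I_n -> nat) (l : nat) : 'I_n -> {mpoly 'F_p[n]} :=
  fun k => ((Phi p M %/ ('X - ('X_k)%:P)) `_ (l * p).-1).

(* "The id-leading term of the nonzero f : F[z]^n is a z^d": z^d is the
   lex-largest monomial occurring (with nonzero coefficient vector) in f,
   and a is the coefficient vector of z^d. *)
Definition is_id_leading_term (R : nzRingType) (n : nat) (f : 'I_n -> {mpoly R[n]})
    (a : 'I_n -> R) (d : 'X_{1..n}) : Prop :=
  (exists k, (f k)@_d != 0) /\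
  (forall k (e : 'X_{1..n}), e \in msupp (f k) -> mlexle e d) /\
  (forall k, (f k)@_d = a k).

(* Main.v *)
Require Import Defs.
From HB Require Import structures.
From mathcomp Require Import all_boot all_order all_algebra.
From mathcomp Require Import multinomials.mpoly.
From mathcomp Require Import ring zify.
Import Order.TTheory GRing.Theory.
Local Open Scope ring_scope.

Definition wc (R : nzRingType) (N a : nat) : R := (-1) ^+ a * 'C(N, a)%:R.

Lemma perm4 (R: comNzRingType) (x y z w : R) : x*y*z*w = x*w*z*y.
Proof. ring. Qed.

Lemma expand1 (R : comNzRingType) n (p N : nat) (j : 'I_n) : (N < p)%N ->
  ('X - ('X_j : {mpoly R[n]})%:P) ^+ N =
  \sum_(a < p) (((wc R N a)%:MP * 'X_j ^+ a)%:P * 'X^(N - a)).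
Proof.
move=> Np; rewrite exprBn.
rewrite (@big_ord_widen _ _ _ N.+1 p (fun i => ((-1) ^+ i * 'X ^+ (N - i) * (('X_j : {mpoly R[n]})%:P) ^+ i) *+ 'C(N, i))) //.
rewrite big_mkcond /=.
apply: eq_bigr => a _; case: ltnP => Ha.
  rewrite /wc !rmorphM /= !rmorphXn /= !rmorphN !rmorph1 /= !rmorph_nat -mulr_natr.
  exact: perm4.
by rewrite /wc bin_small // mulr0n mulr0 rmorph0 mul0r rmorph0 mul0r.
Qed.

Lemma expand (R : comNzRingType) n p (N : 'I_n -> nat) : (forall j, N j < p)%N ->
 \prod_(j < n) ('X - (('X_j : {mpoly R[n]}))%:P) ^+ (N j) =
 \sum_(f : {ffun 'I_n -> 'I_p})
   ((\prod_j wc R (N j) (f j))%:MP * 'X_[[multinom (f j : nat) | j < n]])%:P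
      * 'X^(\sum_j (N j - f j))%N.
Proof.
move=> HN; under eq_bigr => j _ do rewrite (expand1 R n p (N j) j (HN j)).
rewrite bigA_distr_bigA; apply: eq_bigr => f _.
rewrite big_split /= prodrXr; congr (_ * _).
rewrite -rmorph_prod; congr (_%:P).
rewrite big_split /= rmorph_prod mpolyXE_id; congr (_ * _).
by apply: eq_bigr => j _; rewrite mnmE.
Qed.

Lemma coef_expand (R : comNzRingType) n p (N : 'I_n -> nat) (t : nat) (e : 'X_{1..n}) :
 (forall j, N j < p)%N ->
 ((\prod_(j < n) ('X - (('X_j : {mpoly R[n]}))%:P) ^+ (N j))`_t)@_e =
 \sum_(f : {ffun 'I_n -> 'I_p}) (((\sum_j (N j - f j))%N == t)%:R
     * \prod_j wc R (N j) (f j) * ([multinom (f j : nat) | j < n] == e)%:R).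
Proof.
move=> HN; rewrite (expand R n p N HN) coef_sum raddf_sum /=.
apply: eq_bigr => f _.
rewrite coefMXn; case: leqP => H.
  rewrite coefC subn_eq0.
  have -> : (t <= \sum_(j < n) (N j - f j))%N = ((\sum_(j < n) (N j - f j))%N == t).
    by rewrite eqn_leq H.
  case: eqP => _; last by rewrite mcoeff0 !mul0r.
  by rewrite mcoeffCM mcoeffX mul1r.
by rewrite mcoeff0 (gtn_eqF H) !mul0r.
Qed.

Lemma supp_bound (R : comNzRingType) n p (N : 'I_n -> nat) (t : nat) (e : 'X_{1..n}) :
 (forall j, N j < p)%N ->
 ((\prod_(j < n) ('X - (('X_j : {mpoly R[n]}))%:P) ^+ (N j))`_t)@_e != 0 ->
 (forall j, e j <= N j)%N /\ (\sum_j (N j - e j))%N = t.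
Proof.
move=> HN; rewrite (coef_expand R n p N t e HN).
case: (pickP (fun f : {ffun 'I_n -> 'I_p} => [&& ((\sum_j (N j - f j))%N == t),
   [forall j, (f j <= N j)%N] & ([multinom (f j : nat) | j < n] == e)])).
  move=> f /and3P [/eqP Ht /forallP Hf /eqP He] _.
  have Hef : forall j, e j = f j by move=> j; rewrite -He mnmE.
  split; first by move=> j; rewrite Hef.
  by rewrite -Ht; apply: eq_bigr => j _; rewrite Hef.
move=> Hno; rewrite big1 ?eqxx // => f _.
move: (Hno f); case: eqP => [Ht|]; last by rewrite !mul0r.
case: eqP => [He|]; last by rewrite !mulr0.
rewrite andbT /= => /negbT; rewrite negb_forall => /existsP [j]; rewrite -ltnNge => Hj.
by rewrite (bigD1 j) //= /wc bin_small // mulr0n mulr0 mul0r mulr0 mul0r.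
Qed.

Lemma coef_at (R : comNzRingType) n p (N : 'I_n -> nat) (t : nat) (e : 'X_{1..n}) :
 (forall j, N j < p)%N -> (forall j, e j < p)%N ->
 ((\prod_(j < n) ('X - (('X_j : {mpoly R[n]}))%:P) ^+ (N j))`_t)@_e =
   ((\sum_j (N j - e j))%N == t)%:R * \prod_j wc R (N j) (e j).
Proof.
move=> HN He; rewrite (coef_expand R n p N t e HN).
pose f0 : {ffun 'I_n -> 'I_p} := [ffun j => Ordinal (He j)].
have f0E : forall j, (f0 j : nat) = e j by move=> j; rewrite ffunE.
have mf0 : [multinom (f0 j : nat) | j < n] = e.
  by apply/mnmP => j; rewrite mnmE f0E.
rewrite (bigD1 f0) //= [X in _ + X]big1 ?addr0.
  rewrite mf0 eqxx mulr1. congr (_ * _).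
    by congr ((_ == _)%:R); apply: eq_bigr => j _; rewrite f0E.
  by apply: eq_bigr => j _; rewrite f0E.
move=> f Hf; case: (@eqP _ _ e) => [Hmf|_]; last by rewrite mulr0.
case/eqP: Hf; apply/ffunP => j; apply: val_inj.
by rewrite /= f0E -Hmf mnmE.
Qed.

Lemma prod_split (R : comNzRingType) n (g : 'I_n -> R) (M : 'I_n -> nat) k :
  (0 < M k)%N -> \prod_j g j ^+ M j = g k * \prod_j g j ^+ (M j - (j == k))%N.
Proof.
move=> Mk; rewrite (bigD1 k) //= [in RHS](bigD1 k) //= eqxx subn1 mulrA -exprS prednK //.
congr (_ * _); apply: eq_bigr => j /negbTE ->; by rewrite subn0.
Qed.

Lemma divgen (R : idomainType) n (M : 'I_n -> nat) (k : 'I_n) : (0 < M k)%N ->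
  (\prod_j ('X - (('X_j : {mpoly R[n]}))%:P) ^+ M j) %/ ('X - ('X_k)%:P) =
  \prod_j ('X - (('X_j : {mpoly R[n]}))%:P) ^+ (M j - (j == k))%N.
Proof.
move=> Mk; rewrite (@prod_split _ _ (fun j => ('X - (('X_j : {mpoly R[n]}))%:P)) M k Mk).
by rewrite Pdiv.IdomainMonic.mulKp ?monicXsubC.
Qed.

Lemma divPhi p n (M : 'I_n -> nat) (k : 'I_n) : (0 < M k)%N ->
  Phi p M %/ ('X - ('X_k)%:P) =
  \prod_j ('X - (('X_j : {mpoly 'F_p[n]}))%:P) ^+ (M j - (j == k))%N.
Proof. move=> Mk. rewrite /Phi. exact: divgen. Qed.

Lemma lexle_refl s : lexle s s.
Proof. by elim: s => //= x s ->; rewrite eqxx orbT. Qed.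

Lemma lexle_first (s t : seq nat) j : size s = size t -> (j < size s)%N ->
  (forall k, k < j -> nth 0 s k = nth 0 t k)%N -> (nth 0 s j < nth 0 t j)%N -> lexle s t.
Proof.
elim: s t j => [|x s IH] [|y t] j //= [Hs] Hj Hk Hlt.
case: j Hj Hk Hlt => [|j] Hj Hk Hlt /=; first by rewrite Hlt.
have /= -> := Hk 0%N isT; rewrite eqxx ltnn /=.
apply: (IH t j) => // k Hkj; exact: (Hk k.+1).
Qed.

Lemma mnm_nth n (m : 'X_{1..n}) (j : 'I_n) : m j = nth 0%N (tval (multinom_val m)) j.
Proof. by rewrite mnm_tnth (tnth_nth 0%N). Qed.

Lemma mlex_lt n (e d : 'X_{1..n}) (j : 'I_n) :
  (forall k : 'I_n, k < j -> e k = d k)%N -> (e j < d j)%N -> mlexle e d.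
Proof.
move=> Hk Hj; rewrite /mlexle; apply: (@lexle_first _ _ j).
- by rewrite !size_tuple.
- by rewrite size_tuple.
- move=> k Hkj; have Hkn : (k < n)%N by apply: ltn_trans Hkj _.
  by have := Hk (Ordinal Hkn) Hkj; rewrite !mnm_nth.
by rewrite -!mnm_nth.
Qed.

Lemma mlex_refl n (e : 'X_{1..n}) : mlexle e e.
Proof. exact: lexle_refl. Qed.

Lemma sq1 (F : fieldType) (s : F) : s ^+ 2 = 1 -> s = 1 \/ s = -1.
Proof.
move=> H; have : (s - 1) * (s + 1) = 0 by rewrite mulrDr mulrBl -expr2 H; ring.
move/eqP; rewrite mulf_eq0 => /orP [|]; rewrite ?subr_eq0 ?addr_eq0 => /eqP; by [left|right].
Qed.

Lemma fid_true (F : fieldType) (sA su sv C Z V W X : F) : sv ^+ 2 = 1 -> su != 0 -> Z != 0 -> V != 0 -> W != 0 ->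
 sA * (su * sv) * (su * sv * (C * (Z * (V * W))) * (- sv * (sv / W)) / (su * Z)) * (1 / - V - 0 / X) = sA * su * C.
Proof.
move=> /sq1 [] -> su0 Z0 V0 W0; rewrite mul0r subr0; field; by rewrite oppr_eq0 V0 Z0 su0 W0.
Qed.

Lemma fid_false (F : fieldType) (sA su sv C Z V W U : F) : sv ^+ 2 = 1 -> su != 0 -> Z != 0 -> V != 0 -> W != 0 -> U != 0 ->
  sA * (su * sv) *
  (su * sv * (U * (C * (Z * W))) * (- sv * (sv / W)) / (su * Z)) *
  (0 / - V - 1 / U) = sA * su * C.
Proof.
move=> /sq1 [] -> su0 Z0 V0 W0 U0; rewrite mul0r sub0r; field; by rewrite U0 Z0 su0 W0.
Qed.

Lemma natFp0 p k : prime p -> ((k%:R : 'F_p) == 0) = (p %| k)%N.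
Proof. by move=> pr; rewrite (dvdn_pcharf (pchar_Fp pr)). Qed.

Lemma natFp_neq0 p k : prime p -> (0 < k < p)%N -> (k%:R : 'F_p) != 0.
Proof. by move=> pr /andP [k0 kp]; rewrite natFp0 // gtnNdvd. Qed.

Lemma factFp_neq0 p k : prime p -> (k < p)%N -> (k`!%:R : 'F_p) != 0.
Proof.
move=> pr; elim: k => [|k IH] kp; first by rewrite fact0 oner_neq0.
rewrite factS natrM mulf_neq0 ?IH ?natFp_neq0 //; first exact: ltnW.
Qed.

Lemma M_lt_p p q (m M : nat) : prime p -> prime q -> (q < p)%N -> (0 < m < q)%N ->
  (0 < M)%N -> (M%:R = - m%:R / q%:R :> 'F_p) ->
  (forall t : nat, (0 < t)%N -> (t%:R = - m%:R / q%:R :> 'F_p) -> (M <= t)%N) -> (M < p)%N.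
Proof.
move=> pr qr qp /andP [m0 mq] M0 HM Hmin.
rewrite ltnNge; apply/negP => pM.
case: (ltngtP p M) => [pM'|Mp'|Mp].
- have := Hmin (M - p)%N; rewrite subn_gt0 pM' natrB ?(ltnW pM') // pchar_Fp_0 // subr0.
  move=> /(_ isT HM); rewrite leqNgt ltn_subrL prime_gt0 //=.
  by rewrite (ltn_trans _ pM') // prime_gt0.
- by move: pM; rewrite leqNgt Mp'.
have : (m%:R : 'F_p) == 0.
  move: HM; rewrite -Mp pchar_Fp_0 // => /esym /eqP.
  rewrite mulf_eq0 invr_eq0 oppr_eq0 => /orP [//|].
  by move=> Hq; exfalso; move: Hq; apply/negP; apply: (natFp_neq0 p q pr); rewrite prime_gt0 // qp.
by rewrite natFp0 // gtnNdvd // (ltn_trans mq qp).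
Qed.

Lemma wilson_gen p v : prime p -> (0 < v <= p)%N ->
  ((p - v)`!%:R * (v.-1)`!%:R : 'F_p) = (-1) ^+ v.
Proof.
move=> pr; elim: v => [//|v IH] /andP [_ vp].
case: v IH vp => [_ _|v IH vp].
  rewrite fact0 mulr1 expr1 subn1.
  have W := Wilson (prime_gt1 pr); rewrite pr in W.
  have : ((((p.-1)`!).+1)%:R : 'F_p) == 0 by rewrite natFp0 // -W.
  move=> /eqP; rewrite mulrSr => H.
  by apply/eqP; rewrite -subr_eq0 opprK H.
have := IH (ltnW vp).
have -> : (p - v.+1 = (p - v.+2).+1)%N by lia.
rewrite factS natrM /= factS natrM.
have -> : ((p - v.+2).+1%:R : 'F_p) = - (v.+1)%:R.
  have -> : ((p - v.+2).+1 = p - v.+1)%N by lia.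
  by rewrite natrB ?(ltnW vp) // pchar_Fp_0 // sub0r.
move=> H; rewrite exprS -H; ring.
Qed.

Lemma gamma_id p (A u v : nat) (b : bool) (s : 'F_p) : prime p -> odd p -> (0 < v)%N ->
 (u + v < p)%N -> s = - v%:R ->
 (-1) ^+ (A + (u + v)) * (GammaFp p (u + v).+1 * GammaFp p (p - v).+1 / GammaFp p u.+1)
   * (b%:R / s - (~~ b)%:R / (u + v)%:R)
 = (-1) ^+ (A + u) * ('C(u + v - ~~ b, u))%:R.
Proof.
move=> pr podd v0 uvp ->; rewrite /GammaFp /=.
have vp : (v <= p)%N by lia.
have hW : ((p - v)`!%:R * (v.-1)`!%:R : 'F_p) = (-1) ^+ v.
  by apply: wilson_gen => //; rewrite v0 vp.
case: v v0 uvp vp hW => [//|v'] _ uvp vp hW.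
have Z0 : (u`!%:R : 'F_p) != 0 by apply: factFp_neq0 => //; lia.
have W0 : (v'`!%:R : 'F_p) != 0 by apply: factFp_neq0 => //; lia.
have V0 : (v'.+1%:R : 'F_p) != 0 by apply: natFp_neq0 => //; lia.
have UV0 : ((u + v'.+1)%:R : 'F_p) != 0 by apply: natFp_neq0 => //; lia.
have S0 : ((-1) ^+ u : 'F_p) != 0 by rewrite signr_eq0.
have Y : ((p - v'.+1)`!%:R : 'F_p) = (-1) ^+ v'.+1 / v'`!%:R.
  by rewrite -hW /= mulfK.
have Sp : ((-1) ^+ (p - v'.+1) : 'F_p) = - (-1) ^+ v'.+1.
  have : ((-1) ^+ (p - v'.+1) * (-1) ^+ v'.+1 : 'F_p) = -1.
    by rewrite -exprD subnK // -signr_odd podd expr1.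
  move=> H; have := congr1 (fun x => x * (-1) ^+ v'.+1) H => /=.
  by rewrite -mulrA -expr2 sqrr_sign mulr1 mulN1r.
have C1 : ('C(u + v', u) * (u`! * v'`!))%N = (u + v')`!.
  by rewrite -{2}(addKn u v') bin_fact // leq_addr.
have C2 : ('C(u + v'.+1, u) * (u`! * v'.+1`!))%N = (u + v'.+1)`!.
  by rewrite -{2}(addKn u v'.+1) bin_fact // leq_addr.
rewrite Y Sp !exprD.
rewrite -[(-1) ^+ v'.+1](signr_odd _ v'.+1).
move: Z0 W0 V0 UV0 S0 C1 C2.
case: b => /=; rewrite ?subn0 ?subn1.
  move=> Z0 W0 V0 _ S0 _ <-; rewrite factS !natrM.
  move: ((-1) ^+ A : 'F_p) => sA; move: ((-1) ^+ u : 'F_p) S0 => su S0.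
  move: (u`!%:R : 'F_p) Z0 => Z Z0; move: (v'`!%:R : 'F_p) W0 => W W0.
  move: (v'.+1%:R : 'F_p) V0 => V V0; move: ('C(u + v'.+1, u)%:R : 'F_p) => C.
  move: ((-1) ^+ (~~ odd v') : 'F_p) (sqrr_sign 'F_p (~~ odd v')) => sv Hsv.
  move: ((u + v'.+1)%:R : 'F_p) => X.
  exact: fid_true.
rewrite !addnS /= => Z0 W0 V0 UV0 S0 C1 _; rewrite factS -C1 !natrM.
move: ((-1) ^+ A : 'F_p) => sA; move: ((-1) ^+ u : 'F_p) S0 => su S0.
move: (u`!%:R : 'F_p) Z0 => Z Z0; move: (v'`!%:R : 'F_p) W0 => W W0.
move: (v'.+1%:R : 'F_p) V0 => V V0; move: ('C(u + v', u)%:R : 'F_p) => C.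
move: ((u + v').+1%:R : 'F_p) UV0 => U U0.
move: ((-1) ^+ (~~ odd v') : 'F_p) (sqrr_sign 'F_p (~~ odd v')) => sv Hsv.
exact: fid_false.
Qed.

Lemma lex_main n (M : 'I_n -> nat) (i : 'I_n) (u : nat) (e : 'X_{1..n}) :
 (forall j, e j <= M j)%N -> (\sum_j e j)%N = (\sum_(j < n | (j < i)%N) M j + u)%N ->
 mlexle e [multinom (if (j < i)%N then M j else if j == i then u else 0%N) | j < n].
Proof.
move=> HeM Hsum.
set d := [multinom _ | j < n].
have dE : forall j : 'I_n, d j = (if (j < i)%N then M j else if j == i then u else 0%N).
  by move=> j; rewrite mnmE.
case: (pickP (fun j : 'I_n => (j < i)%N && (e j != M j))) => [j0 Hj0 | Hall].
  case: (@arg_minnP _ j0 (fun j : 'I_n => (j < i)%N && (e j != M j)) (fun j => nat_of_ord j) Hj0)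
    => j /andP [ji ej] Hmin.
  apply: (@mlex_lt _ _ _ j).
    move=> k kj; have ki : (k < i)%N by apply: ltn_trans kj ji.
    rewrite dE ki; apply/eqP; apply: contraT => Hk.
    have := Hmin k; rewrite ki Hk => /(_ isT); by rewrite leqNgt kj.
  by rewrite dE ji ltn_neqAle ej HeM.
have Hlt : forall j : 'I_n, (j < i)%N -> e j = M j.
  by move=> j ji; have := Hall j; rewrite ji /=; case: eqP.
move: Hsum; rewrite (bigID (fun j : 'I_n => (j < i)%N)) /=.
rewrite (eq_bigr (fun j => M j)); last by move=> j /Hlt.
rewrite [X in (_ + X)%N = _](bigD1 i) /=; last by rewrite ltnn.
move/eqP; rewrite eqn_add2l => /eqP Hs.
case: (ltngtP (e i) u) => [eu|ue|eu].
- apply: (@mlex_lt _ _ _ i); last by rewrite dE ltnn eqxx.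
  by move=> k ki; rewrite dE ki Hlt.
- lia.
have Hz : forall j : 'I_n, (i < j)%N -> e j = 0%N.
  move=> j ij; move: Hs; rewrite (bigD1 j) /=; last first.
    by rewrite -leqNgt ltnW //=; apply/eqP => jE; move: ij; rewrite jE ltnn.
  lia.
have -> : e = d.
  apply/mnmP => j; rewrite dE; case: (ltngtP j i) => [ji|ij|ji].
  - exact: Hlt.
  - rewrite (Hz _ ij); case: eqP => // jE; move: ij; by rewrite jE ltnn.
  - have -> : j = i by apply: val_inj.
    by rewrite eqxx eu.
exact: mlex_refl.
Qed.

Lemma sum_split_lt n (F : 'I_n -> nat) (i : 'I_n) :
  (\sum_j F j = \sum_(j < n | (j < i)%N) F j + \sum_(j < n | (i <= j)%N) F j)%N.
Proof.
rewrite (bigID (fun j : 'I_n => (j < i)%N)) /=; congr addn.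
by apply: eq_bigl => j; rewrite -leqNgt.
Qed.

Lemma sum_split_ge n (F : 'I_n -> nat) (i : 'I_n) :
  (\sum_(j < n | (i <= j)%N) F j = F i + \sum_(j < n | (i < j)%N) F j)%N.
Proof.
rewrite (bigD1 i) //=; congr addn; apply: eq_bigl => j.
by rewrite ltn_neqAle andbC eq_sym.
Qed.

Lemma sum_split_le n (F : 'I_n -> nat) (i : 'I_n) :
  (\sum_(j < n | (j <= i)%N) F j = \sum_(j < n | (j < i)%N) F j + F i)%N.
Proof.
rewrite (bigD1 i) //= addnC; congr addn; apply: eq_bigl => j.
by rewrite ltn_neqAle andbC.
Qed.

Lemma sumN n (M : 'I_n -> nat) (k : 'I_n) : (0 < M k)%N ->
  ((\sum_j (M j - (j == k)))%N.+1 = \sum_j M j)%N.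
Proof.
move=> Mk; rewrite (bigD1 k) //= [in RHS](bigD1 k) //= eqxx.
rewrite (eq_bigr (fun j => M j)); last by move=> j /negbTE ->; rewrite subn0.
lia.
Qed.

Lemma sum_sub n (N e : 'I_n -> nat) : (forall j, e j <= N j)%N ->
  (\sum_j N j = \sum_j (N j - e j) + \sum_j e j)%N.
Proof.
move=> H; rewrite -big_split /=; apply: eq_bigr => j _; by rewrite subnK.
Qed.

Theorem theorem6p1 (p q n : nat) (m M : 'I_n -> nat) (l : nat) (i : 'I_n) :
  prime p -> prime q -> (2 <= n)%N -> (n < p)%N -> (q < p)%N ->
  (forall k, 0 < m k < q)%N ->
  (forall k, (0 < M k)%N /\ ((M k)%:R = - (m k)%:R / q%:R :> 'F_p) /\
     (forall t : nat, (0 < t)%N -> (t%:R = - (m k)%:R / q%:R :> 'F_p) -> (M k <= t)%N)) ->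
  (1 <= l <= (\sum_(k < n) M k) %/ p)%N ->
  (l * p <= \sum_(j < n | (i <= j)%N) M j < l * p + M i)%N ->
  let S_i := (\sum_(j < n | (i <= j)%N) M j)%N in
  let S_i1 := (\sum_(j < n | (i < j)%N) M j)%N in
  is_id_leading_term (Il p M l)
    (fun k : 'I_n =>
       (-1) ^+ (\sum_(j < n | (j <= i)%N) M j)%N
       * (GammaFp p (M i).+1 * GammaFp p (S_i1 - (l.-1) * p).+1
          / GammaFp p (S_i - l * p).+1)
       * ((i < k)%N%:R / S_i1%:R - (k == i)%:R / (M i)%:R))
    [multinom (if (j < i)%N then M j else if j == i then (S_i - l * p)%N else 0%N) | j < n].
Proof.
move=> pr qr n2 np qp Hm HM /andP [l1 _] /andP [Hi1 Hi2] S_i S_i1.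
have Mpos k : (0 < M k)%N by case: (HM k).
have Mlt k : (M k < p)%N.
  by case: (HM k) => M0 [HMk Hmin]; apply: (M_lt_p _ _ _ _ pr qr qp (Hm k) M0 HMk Hmin).
have podd : odd p by case: (even_prime pr) => // p2; lia.
have p0 : (0 < p)%N by apply: prime_gt0.
have lp1 : (1 <= l * p)%N by rewrite muln_gt0 l1.
set u := (S_i - l * p)%N.
set A := (\sum_(j < n | (j < i)%N) M j)%N.
have HSi : S_i = (M i + S_i1)%N by rewrite /S_i /S_i1 sum_split_ge.
have HSum : (\sum_j M j = A + S_i)%N by rewrite /A /S_i -sum_split_lt.
have Si_eq : S_i = (l * p + u)%N by rewrite /u; lia.
have uM : (u < M i)%N by rewrite /u; lia.
pose N (k j : 'I_n) := (M j - (j == k))%N.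
have NIl k : Il p M l k = (\prod_j ('X - (('X_j : {mpoly 'F_p[n]}))%:P) ^+ N k j)`_(l * p).-1.
  by rewrite /Il divPhi.
have Nlt k j : (N k j < p)%N by apply: leq_ltn_trans (leq_subr _ _) (Mlt j).
set d := [multinom _ | j < n].
have dE : forall j : 'I_n, d j = (if (j < i)%N then M j else if j == i then u else 0%N).
  by move=> j; rewrite mnmE.
have dlt j : (d j < p)%N.
  rewrite dE; case: ifP => _; first exact: Mlt.
  case: ifP => _; [exact: ltn_trans uM (Mlt i) | exact: p0].
have sumd : (\sum_j d j = A + u)%N.
  rewrite (@sum_split_lt n (fun j => d j) i) (@sum_split_ge n (fun j => d j) i) (dE i) ltnn eqxx [X in (u + X)%N]big1 ?addn0.
    by congr addn; apply: eq_bigr => j ji; rewrite dE ji.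
  move=> j ij; rewrite dE ltnNge ltnW //=; case: eqP => // jE.
  by move: ij; rewrite jE ltnn.
have coefd k : (Il p M l k)@_d =
    if (k < i)%N then 0 else (-1) ^+ (A + u) * ('C(M i - (i == k), u))%:R.
  rewrite NIl (coef_at _ _ _ _ _ _ (Nlt k) dlt).
  case: ltnP => [ki|ik].
    rewrite [X in _ * X](bigD1 k) //= /wc /N dE ki eqxx bin_small; last by rewrite subn1 prednK.
    by rewrite mulr0n mulr0 mul0r mulr0.
  have Hd : forall j, (d j <= N k j)%N.
    move=> j; rewrite dE /N; case: ltnP => ji.
      have -> : (j == k) = false by apply/eqP => jk; move: ji; rewrite jk ltnNge ik.
      by rewrite subn0.
    case: eqP => [->|_] //; lia.
  have Hs : (\sum_j (N k j - d j))%N = (l * p).-1.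
    have := @sum_sub _ _ _ Hd; have := @sumN _ _ _ (Mpos k); rewrite -/(N k) sumd.
    have H3 : (\sum_j N k j = \sum_j (M j - (j == k)))%N by [].
    lia.
  rewrite Hs eqxx mul1r /wc big_split /= prodrXr sumd; congr (_ * _).
  rewrite (bigD1 i) //= /N (dE i) ltnn eqxx [X in _ * X]big1 ?mulr1 //.
  move=> j ji; rewrite dE; case: ltnP => jl.
    have -> : (j == k) = false by apply/eqP => jk; move: jl; rewrite jk ltnNge ik.
    by rewrite subn0 binn.
  by rewrite (negbTE ji) bin0.
split; last split.
- exists i; rewrite coefd ltnn mulf_neq0 ?signr_eq0 //.
  rewrite eqxx subn1.
  have hK : ((((M i).-1)`!)%:R : 'F_p) != 0 by apply: factFp_neq0 => //; have := Mlt i; lia.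
  apply/eqP => HC; move/eqP: hK; apply.
  rewrite -(@bin_fact _ u); last by lia.
  by rewrite natrM HC mul0r.
- move=> k e; rewrite mcoeff_msupp NIl => /(supp_bound _ _ _ _ _ _ (Nlt k)) [HeN Hsum].
  apply: lex_main.
    by move=> j; apply: leq_trans (HeN j) (leq_subr _ _).
  have := @sum_sub _ _ _ HeN; rewrite Hsum.
  have := @sumN _ _ _ (Mpos k); rewrite -/(N k) => H1 H2.
  have H3 : (\sum_j N k j = \sum_j (M j - (j == k)))%N by [].
  lia.
- move=> k; rewrite coefd; case: ltnP => [ki|ik].
    have -> : (i < k)%N = false by apply/negbTE; rewrite -leqNgt ltnW.
    have -> : (k == i) = false by apply/eqP => ki'; move: ki; rewrite ki' ltnn.
    by rewrite !mul0r subrr mulr0.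
  set v := (M i - u)%N.
  have Mi : M i = (u + v)%N by rewrite /v; lia.
  have v0 : (0 < v)%N by rewrite /v; lia.
  have uvp : (u + v < p)%N by rewrite -Mi.
  have Ll : (l * p = l.-1 * p + p)%N by rewrite -{1}(prednK l1) mulSn addnC.
  have E1 : (S_i1 - l.-1 * p)%N = (p - v)%N by have := Mlt i; lia.
  have E2 : (S_i1%:R : 'F_p) = - v%:R.
    have -> : S_i1 = (l * p - v)%N by lia.
    rewrite natrB ?natrM ?pchar_Fp_0 // ?mulr0 ?sub0r //; lia.
  have E3 : (k == i) = ~~ (i < k)%N by rewrite ltn_neqAle ik andbT negbK eq_sym.
  rewrite (@sum_split_le _ (fun j => M j) i) -/A E1 [i == k]eq_sym E3 Mi.
  symmetry; exact: (gamma_id _ _ _ _ _ _ pr podd v0 uvp E2).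
Qed.
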